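(* Let $q$ be a self-join-free Boolean conjunctive query, let $q_0\subseteq q$, let $\mathbf{db}$ be a database, and let $\mathbf{o}$ be a garbage set for $q_0$ in $\mathbf{db}$. If every garbage set for $q_0$ in $\mathbf{db}\setminus\mathbf{o}$ is empty, then $\mathbf{o}$ is the maximal (with respect to $\subseteq$) garbage set for $q_0$ in $\mathbf{db}$.
   Context: Every relation name has a signature $[n,k]$ ($1\le k\le n$; primary-key positions $1,\dots,k$) and a mode in $\{\mathsf{c},\mathsf{i}\}$. Facts are variable-free atoms; facts are key-equal if same relation name and same primary-key values. A database is a finite set of facts with no two distinct key-equal facts of mode $\mathsf{c}$, all of whose relation names occur in $q$. The block of a fact $A$ in $\mathbf{db}$ is the set of facts of $\mathbf{db}$ key-equal to $A$. A repair of a set of facts is a maximal subset without two distinct key-equal facts. A self-join-free Boolean conjunctive query is a finite set of atoms with distinct relation names; for a fact $A$, $\mathrm{atom}(A)$ is the atom of $q$ with the same relation name. A subset $\mathbf{o}\subseteq\mathbf{db}$ is a garbage set for $q_0$ in $\mathbf{db}$ if (1) for every $A\in\mathbf{o}$, $\mathrm{atom}(A)\in q_0$ and the block of $A$ in $\mathbf{db}$ is included in $\mathbf{o}$; and (2) there is a repair $\mathbf{r}$ of $\mathbf{o}$ such that for every valuation $\theta$ of the variables of $q$, if $\theta(q)\subseteq(\mathbf{db}\setminus\mathbf{o})\cup\mathbf{r}$ then $\theta(q_0)\cap\mathbf{r}=\emptyset$. Garbage sets are closed under union, so a unique maximal garbage set exists. *)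

(* Defs.v *)
From Stdlib Require Import List Arith.
Import ListNotations.

Inductive mode := ModeC | ModeI.

(* A relation name carries its signature [arity, keylen] and its mode.
   Primary-key positions are 1..keylen. *)
Record relname := RelName { rid : nat; arity : nat; keylen : nat; rmode : mode }.

Definition var := nat.
Definition const := nat.

Inductive term := TVar (x : var) | TConst (c : const).

Record atom := Atom { arel : relname; aargs : list term }.
Record fact := Fact { frel : relname; fargs : list const }.

Definition factset := fact -> Prop.

Definition subset (A B : factset) : Prop := forall f, A f -> B f.
Definition setminus (A B : factset) : factset := fun f => A f /\ ~ B f.
Definition finite_set (A : factset) : Prop := exists l : list fact, forall f, A f -> In f l.

Definition wf_relname (R : relname) : Prop := 1 <= keylen R /\ keylen R <= arity R.

Definition sjf_bcq (q : list atom) : Prop :=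
  NoDup q /\
  (forall a, In a q -> wf_relname (arel a) /\ length (aargs a) = arity (arel a)) /\
  (forall a b, In a q -> In b q -> arel a = arel b -> a = b).

Definition key_equal (A B : fact) : Prop :=
  frel A = frel B /\ firstn (keylen (frel A)) (fargs A) = firstn (keylen (frel B)) (fargs B).

Definition occurs_in (q : list atom) (R : relname) : Prop := exists a, In a q /\ arel a = R.

Definition database (q : list atom) (db : factset) : Prop :=
  finite_set db /\
  (forall A, db A -> length (fargs A) = arity (frel A)) /\
  (forall A B, db A -> db B -> key_equal A B -> rmode (frel A) = ModeC -> A = B) /\
  (forall A, db A -> occurs_in q (frel A)).

Definition consistent (s : factset) : Prop :=
  forall A B, s A -> s B -> key_equal A B -> A = B.

Definition repair_of (r o : factset) : Prop :=
  subset r o /\ consistent r /\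
  (forall s, subset r s -> subset s o -> consistent s -> subset s r).

Definition valuation := var -> const.

Definition apply_term (th : valuation) (t : term) : const :=
  match t with TVar x => th x | TConst c => c end.

Definition apply_atom (th : valuation) (a : atom) : fact :=
  Fact (arel a) (map (apply_term th) (aargs a)).

Definition garbage (q q0 : list atom) (db o : factset) : Prop :=
  subset o db /\
  (forall A, o A -> occurs_in q0 (frel A) /\ (forall B, db B -> key_equal A B -> o B)) /\
  (exists r, repair_of r o /\
     forall th : valuation,
       (forall a, In a q -> (setminus db o (apply_atom th a) \/ r (apply_atom th a))) ->
       forall a, In a q0 -> ~ r (apply_atom th a)).

Definition maximal_garbage (q q0 : list atom) (db o : factset) : Prop :=
  garbage q q0 db o /\ (forall o', garbage q q0 db o' -> subset o' o).

(* Main.v *)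
Require Import Defs.
From Stdlib Require Import List Classical.

Lemma key_equal_sym A B : key_equal A B -> key_equal B A.
Proof. intros [H1 H2]. split; [symmetry; exact H1|]. rewrite H1 in H2 |- *. symmetry. exact H2. Qed.

Lemma garbage_diff q q0 db o o' :
  (forall A, o A -> forall B, db B -> key_equal A B -> o B) ->
  garbage q q0 db o' -> garbage q q0 (setminus db o) (setminus o' o).
Proof.
  intros Ho [Hsub [Hblk [r' [[Hr1 [Hr2 Hr3]] Hth]]]].
  split; [|split].
  - intros f [H1 H2]. split; auto.
  - intros A [HA1 HA2]. split; [apply (Hblk A HA1)|].
    intros B [HB1 HB2] HAB. split; auto. apply (proj2 (Hblk A HA1)); auto.
  - exists (fun f => r' f /\ setminus o' o f). split; [split; [|split]|].
    + intros f [_ H]; exact H.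
    + intros A B [HA _] [HB _] HAB. apply Hr2; auto.
    + intros s Hs1 Hs2 Hs3 f Hf.
      assert (Hu : subset (fun x => s x \/ r' x) r').
      { apply Hr3.
        - intros x Hx; right; exact Hx.
        - intros x [Hx|Hx]; [apply (proj1 (Hs2 x Hx))|apply Hr1; exact Hx].
        - intros A B [HA|HA] [HB|HB] HAB.
          + apply Hs3; auto.
          + assert (HBo : ~ o B).
            { intro HBo. apply (proj2 (Hs2 A HA)). apply (Ho B HBo A).
              - apply Hsub, (proj1 (Hs2 A HA)).
              - apply key_equal_sym; exact HAB. }
            apply Hs3; auto. apply Hs1. split; [exact HB|]. split; [apply Hr1; exact HB|exact HBo].
          + assert (HAo : ~ o A).
            { intro HAo. apply (proj2 (Hs2 B HB)). apply (Ho A HAo B); auto.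
              apply Hsub, (proj1 (Hs2 B HB)). }
            apply Hs3; auto. apply Hs1. split; [exact HA|]. split; [apply Hr1; exact HA|exact HAo].
          + apply Hr2; auto. }
      split; [apply Hu; left; exact Hf| apply Hs2; exact Hf].
    + intros th Hall a Ha0 [Hr _]. apply (Hth th) with a; auto.
      intros b Hb. destruct (Hall b Hb) as [[[H1 H2] H3]|[H1 _]].
      * left. split; auto. intro H4. apply H3. split; auto.
      * right; exact H1.
Qed.

Theorem corollary31 (q q0 : list atom) (db o : factset) :
  sjf_bcq q -> incl q0 q -> database q db ->
  garbage q q0 db o ->
  (forall o', garbage q q0 (setminus db o) o' -> forall f, ~ o' f) ->
  maximal_garbage q q0 db o.
Proof.
  intros _ _ _ Hg Hempty. split; [exact Hg|].
  intros o' Hg' f Hf. apply NNPP. intro Hno.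
  apply (Hempty _ (garbage_diff q q0 db o o' (fun A HA => proj2 (proj1 (proj2 Hg) A HA)) Hg') f).
  split; auto.
Qed.
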